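(* Let $F$ be an indexed group with degree map $\deg: F\to\mathbb{Z}$, let $\varphi: F\to G$ be a homomorphism to a group $G$, let $f_1\in F$ have degree one, and let $g\in G$. Then: 1) there exists a homomorphism $\psi: F\to G$ with $\psi(f)=\varphi(f)$ for all $f$ of degree zero and $\psi(f_1)=\varphi(f_1)g$ if and only if $g$ lies in the centraliser $C(\varphi(\ker\deg))$; and such $\psi$, when it exists, is unique; 2) if $H$ is a subgroup of $G$ and $g\in H_\varphi$, then (the homomorphism $\psi$ from 1) exists and) $\psi(f)H=\varphi(f)H$ for all $f\in F$.
   Context: An indexed group is a group $F$ equipped with a surjective homomorphism $\deg: F\to\mathbb{Z}$. For $x,y$ in a group, $x^y=y^{-1}xy$ and $H^y=y^{-1}Hy$; $C(X)$ is the centraliser of $X$. For a subgroup $H\le G$, the $\varphi$-core of $H$ is $H_\varphi=\bigcap_{f\in F}H^{\varphi(f)}\cap C(\{\varphi(f)\mid\deg f=0\})$. *)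

(* Defs.v *)
From HB Require Import structures.
From mathcomp Require Import all_boot all_order all_algebra.
From mathcomp Require Export monoid ssrint.

Set Implicit Arguments.
Unset Strict Implicit.
Unset Printing Implicit Defensive.

Import GRing.Theory.

Definition indexed_deg (F : groupType) (deg : F -> int) : Prop :=
  (forall x y : F, deg (x * y)%g = (deg x + deg y)%R) /\
  (forall n : int, exists f : F, deg f = n).

Definition group_hom (F G : groupType) (phi : F -> G) : Prop :=
  monoid.monoid_morphism phi.

Definition centraliser (G : groupType) (X : G -> Prop) : G -> Prop :=
  fun x => forall y, X y -> (x * y = y * x)%g.

Definition image_ker (F G : groupType) (deg : F -> int) (phi : F -> G) : G -> Prop :=
  fun y => exists f : F, deg f = 0%R /\ y = phi f.

Definition in_conj (G : groupType) (H : {pred G}) (y x : G) : Prop :=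
  exists2 h, h \in H & x = (y^-1 * h * y)%g.

Definition phi_core (F G : groupType) (deg : F -> int) (phi : F -> G)
    (H : {pred G}) : G -> Prop :=
  fun x => (forall f : F, in_conj H (phi f) x) /\
           centraliser (image_ker deg phi) x.

Definition lcoset (G : groupType) (x : G) (H : {pred G}) : G -> Prop :=
  fun y => exists2 h, h \in H & y = (x * h)%g.

Definition twisted_ext (F G : groupType) (deg : F -> int) (phi : F -> G)
    (f1 : F) (g : G) (psi : F -> G) : Prop :=
  [/\ group_hom psi,
      (forall f : F, deg f = 0%R -> psi f = phi f) &
      psi f1 = (phi f1 * g)%g].

(* Main.v *)
Require Import Defs.
From mathcomp Require Import all_boot all_order all_algebra.
From mathcomp Require Import monoid ssrint.
From mathcomp Require Import zify.
Set Implicit Arguments.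
Unset Strict Implicit.
Import GRing.Theory.

Definition zexp (G : groupType) (x : G) (n : int) : G :=
  match n with Posz m => (x ^+ m)%g | Negz m => ((x ^+ m.+1)^-1)%g end.

Lemma int_ind3 (P : int -> Prop) : P 0%R -> (forall n, P n -> P (n+1)%R) ->
  (forall n, P n -> P (n-1)%R) -> forall n, P n.
Proof.
move=> P0 PS PP; case=> m; elim: m => [|m IH] //.
- have -> : Posz m.+1 = (Posz m + 1)%R by lia. exact: PS.
- have -> : Negz 0 = (0 - 1)%R by lia. exact: PP.
- have -> : Negz m.+1 = (Negz m - 1)%R by lia. exact: PP.
Qed.

Lemma zexpS (G : groupType) (x : G) n : zexp x (n + 1)%R = (zexp x n * x)%g.
Proof.
case: n => [m|[|m]].
- have -> : (Posz m + 1)%R = Posz m.+1 by lia. by rewrite /= expgSr.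
- have -> : (Negz 0 + 1)%R = Posz 0 by lia. by rewrite /= expg1 mulVg.
- have -> : (Negz m.+1 + 1)%R = Negz m by lia.
  rewrite /= [(x ^+ m.+2)%g]expgS invgM.
  by rewrite -mulgA mulVg mulg1.
Qed.

Lemma zexpP (G : groupType) (x : G) n : zexp x (n - 1)%R = (zexp x n * x^-1)%g.
Proof.
have := zexpS x (n - 1)%R; have -> : (n - 1 + 1)%R = n by lia.
by move=> ->; rewrite mulgK.
Qed.

Lemma zexp0 (G : groupType) (x : G) : zexp x 0 = 1%g.
Proof. by []. Qed.

Lemma zexp1 (G : groupType) (x : G) : zexp x 1 = x.
Proof. by []. Qed.

Lemma zexpD (G : groupType) (x : G) m n :
  zexp x (m + n)%R = (zexp x m * zexp x n)%g.
Proof.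
elim/int_ind3: n => [|n IH|n IH].
- by rewrite addr0 zexp0 mulg1.
- by rewrite addrA !zexpS IH mulgA.
- by rewrite addrA !zexpP IH mulgA.
Qed.

Lemma hom_inv (F G : groupType) (phi : F -> G) : group_hom phi ->
  forall x, phi (x^-1)%g = ((phi x)^-1)%g.
Proof.
move=> [h1 hM] x; apply/esym/mulg1_eq.
by rewrite -hM mulgV h1.
Qed.

Lemma zexp_morph (F G : groupType) (phi : F -> G) : group_hom phi ->
  forall x n, phi (zexp x n) = zexp (phi x) n.
Proof.
move=> hp x; elim/int_ind3 => [|n IH|n IH].
- by rewrite !zexp0 hp.1.
- by rewrite !zexpS hp.2 IH.
- by rewrite !zexpP hp.2 IH hom_inv.
Qed.

Local Open Scope group_scope.

Definition tw (G : groupType) (a g : G) n := (zexp a n)^-1 * zexp (a*g) n.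
Definition cw (G : groupType) (a g : G) n := (zexp a n)^-1 * g * zexp a n.

Lemma tw0 (G : groupType) (a g : G) : tw a g 0 = 1.
Proof. by rewrite /tw !zexp0 invg1 mulg1. Qed.

Lemma tw1 (G : groupType) (a g : G) : tw a g 1 = g.
Proof. by rewrite /tw !zexp1 mulgA mulVg mul1g. Qed.

Lemma twS (G : groupType) (a g : G) n : tw a g (n+1)%R = cw a g n * tw a g n.
Proof.
rewrite /tw /cw addrC !zexpD !zexp1 invgM.
by rewrite !mulgA -(mulgA _ a^-1) mulVg mulg1 mulgK.
Qed.

Lemma tw_cocycle (G : groupType) (a g : G) m n :
  tw a g (m + n)%R = (zexp a n)^-1 * tw a g m * zexp a n * tw a g n.
Proof.
rewrite /tw !zexpD invgM.
by rewrite !mulgA -(mulgA _ (zexp a n)) mulgV mulg1.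
Qed.

Lemma tw_closed (G : groupType) (a g : G) (P : G -> Prop) :
  P 1 -> (forall x y, P x -> P y -> P (x * y)) -> (forall x, P x -> P x^-1) ->
  (forall n, P (cw a g n)) -> forall n, P (tw a g n).
Proof.
move=> P1 PM PV Pc; elim/int_ind3 => [|n IH|n IH].
- by rewrite tw0.
- by rewrite twS; apply: PM.
- have E := twS a g (n - 1)%R; have e : (n - 1 + 1)%R = n by lia.
  rewrite e in E; rewrite -[tw a g (n-1)%R](mulKg (cw a g (n - 1)%R)) -E.
  by apply: PM => //; apply: PV.
Qed.

Lemma deg1 (F : groupType) (deg : F -> int) : indexed_deg deg -> deg 1 = 0%R.
Proof.
move=> [dM _]; have := dM 1 1; rewrite mulg1 => e.
lia.
Qed.

Lemma degV (F : groupType) (deg : F -> int) : indexed_deg deg ->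
  forall x, deg x^-1 = (- deg x)%R.
Proof.
move=> hd x; have := hd.1 x x^-1; rewrite mulgV deg1 // => e.
lia.
Qed.

Lemma degE (F : groupType) (deg : F -> int) (f1 : F) : indexed_deg deg ->
  deg f1 = 1%R -> forall n, deg (zexp f1 n) = n.
Proof.
move=> hd h1; elim/int_ind3 => [|n IH|n IH].
- by rewrite zexp0 deg1.
- by rewrite zexpS hd.1 IH h1.
- by rewrite zexpP hd.1 IH degV // h1.
Qed.

Lemma conj_comm (G : groupType) (x y A : G) : x * y = y * x ->
  (A^-1 * x * A) * (A^-1 * y * A) = (A^-1 * y * A) * (A^-1 * x * A).
Proof.
move=> e; rewrite !mulgA -(mulgA _ A A^-1) mulgV mulg1.
rewrite -(mulgA _ A A^-1) mulgV mulg1 -!mulgA (mulgA x) e !mulgA //.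
Qed.

Lemma hom_step (G : groupType) (P T A Ty K : G) : K * T = T * K ->
  P * (K * A) * (A^-1 * T * A * Ty) = P * T * (K * A * Ty).
Proof.
move=> e; rewrite !mulgA -(mulgA _ A A^-1) mulgV mulg1.
by rewrite -(mulgA P K T) e !mulgA.
Qed.

Lemma ext_of_cent (F G : groupType) (deg : F -> int) (phi : F -> G)
    (f1 : F) (g : G) :
  indexed_deg deg -> group_hom phi -> deg f1 = 1%R ->
  centraliser (image_ker deg phi) g ->
  twisted_ext deg phi f1 g (fun f => phi f * tw (phi f1) g (deg f)).
Proof.
move=> hd hp h1 hg; set a := phi f1.
have Cent : forall n k, deg k = 0%R -> tw a g n * phi k = phi k * tw a g n.
  move=> n k; apply: (tw_closed (P := fun x => forall k, deg k = 0%R -> x * phi k = phi k * x)).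
  - by move=> k' _; rewrite mulg1 mul1g.
  - by move=> x y Px Py k' hk; rewrite -mulgA Py // !mulgA Px.
  - move=> x Px k' hk; apply: (mulgI x); rewrite mulgA mulgV mul1g.
    by apply: (mulIg x); rewrite -(mulgA _ _ x) mulgVK Px.
  - move=> m k' hk.
    set E := zexp f1 m; set k2 := E * k' * E^-1.
    have dk2 : deg k2 = 0%R by rewrite /k2 !hd.1 degV // hk; lia.
    have e : phi k' = (zexp a m)^-1 * phi k2 * zexp a m.
      rewrite /k2 !hp.2 hom_inv // /E (zexp_morph hp).
      by rewrite !mulgA mulVg mul1g mulgVK.
    rewrite e /cw; apply: conj_comm; apply: hg; by exists k2.
split.
- split; first by rewrite /= hp.1 deg1 // tw0 mulg1.
  move=> x y; cbv beta; rewrite hd.1 tw_cocycle hp.2.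
  set A := zexp a (deg y).
  have ey : phi y = phi (y * (zexp f1 (deg y))^-1) * A.
    by rewrite hp.2 hom_inv // (zexp_morph hp) mulgVK.
  have dk : deg (y * (zexp f1 (deg y))^-1) = 0%R by rewrite hd.1 degV // degE //; lia.
  rewrite ey; apply: hom_step; exact/esym/Cent.
- by move=> f hf /=; rewrite hf tw0 mulg1.
- by rewrite /= h1 tw1.
Qed.

Lemma cent_of_ext (F G : groupType) (deg : F -> int) (phi : F -> G)
    (f1 : F) (g : G) (psi : F -> G) :
  indexed_deg deg -> group_hom phi -> deg f1 = 1%R ->
  twisted_ext deg phi f1 g psi -> centraliser (image_ker deg phi) g.
Proof.
move=> hd hp h1 [hpsi h0 hf1] y [k [hk ->]].
set k2 := f1 * k * f1^-1.
have dk2 : deg k2 = 0%R by rewrite /k2 !hd.1 degV // hk; lia.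
have := h0 _ dk2; rewrite /k2 !hpsi.2 !hp.2 (hom_inv hpsi) (hom_inv hp) hf1 h0 //.
rewrite invgM -!mulgA => /mulgI; rewrite !mulgA => /mulIg e.
by rewrite -{2}e mulgVK.
Qed.

Lemma ext_unique (F G : groupType) (deg : F -> int) (phi : F -> G)
    (f1 : F) (g : G) (psi : F -> G) :
  indexed_deg deg -> group_hom phi -> deg f1 = 1%R ->
  twisted_ext deg phi f1 g psi -> forall f, psi f = phi f * tw (phi f1) g (deg f).
Proof.
move=> hd hp h1 [hpsi h0 hf1] f.
set k := f * (zexp f1 (deg f))^-1.
have dk : deg k = 0%R by rewrite hd.1 degV // degE //; lia.
have ef : f = k * zexp f1 (deg f) by rewrite mulgVK.
rewrite {1 2}ef hpsi.2 hp.2 h0 // (zexp_morph hp) (zexp_morph hpsi) hf1.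
by rewrite /tw -!mulgA mulVKg.
Qed.

Local Close Scope group_scope.

Theorem lemma0 (F G : groupType) (deg : F -> int) (phi : F -> G)
    (f1 : F) (g : G) :
  indexed_deg deg -> group_hom phi -> deg f1 = 1%R ->
  (* 1) existence iff g centralises phi(ker deg), and uniqueness *)
  ((exists psi : F -> G, twisted_ext deg phi f1 g psi) <->
      centraliser (image_ker deg phi) g) /\
  (forall psi1 psi2 : F -> G,
      twisted_ext deg phi f1 g psi1 -> twisted_ext deg phi f1 g psi2 ->
      forall f, psi1 f = psi2 f) /\
  (* 2) *)
  (forall H : {pred G}, group_closed H -> phi_core deg phi H g ->
      (exists psi : F -> G, twisted_ext deg phi f1 g psi) /\
      (forall psi : F -> G, twisted_ext deg phi f1 g psi ->
         forall f : F, forall y : G,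
           lcoset (psi f) H y <-> lcoset (phi f) H y)).
Proof.
move=> hd hp h1.
have E := ext_of_cent hd hp h1.
split; [split|split].
- by move=> [psi hpsi]; exact: cent_of_ext hpsi.
- by move=> hc; eexists; exact: E.
- move=> psi1 psi2 e1 e2 f.
  by rewrite (ext_unique hd hp h1 e1) (ext_unique hd hp h1 e2).
move=> H hH [hconj hcent]; split; first by eexists; exact: E.
move=> psi hpsi f y; rewrite (ext_unique hd hp h1 hpsi f).
have tH : tw (phi f1) g (deg f) \in H.
  apply: (tw_closed (P := fun x => x \in H)).
  - exact: hH.1.
  - by move=> x z hx hz; apply: (group_closedM hH).
  - by move=> x hx; apply: (group_closedV hH).
  - move=> n; have [h hh e] := hconj ((zexp f1 n)^-1)%g.
    rewrite (hom_inv hp) (zexp_morph hp) invgK in e.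
    by rewrite /cw e !mulgA mulVg mul1g mulgVK.
split => [[h hh ->] | [h hh ->]].
- exists (tw (phi f1) g (deg f) * h)%g; first exact: (group_closedM hH).
  by rewrite -mulgA.
- exists ((tw (phi f1) g (deg f))^-1 * h)%g.
    by apply: (group_closedM hH) => //; apply: (group_closedV hH).
  by rewrite mulgA mulgK.
Qed.
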